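(* Let $\mathcal{G}=(\mathcal{V},\mathcal{E})$ be a connected undirected graph (a transmission network) with nodes $\mathcal{V}=\{1,\dots,N\}$ and edges $e_1,\dots,e_L$, $\mathcal{L}=\{1,\dots,L\}$, each edge given a fixed orientation, with incidence matrix $\mathbf{Q}=(q_{il})\in\mathbb{R}^{N\times L}$ ($q_{il}=1$ if $i$ is the initial node of $e_l$, $-1$ if it is the terminal node, $0$ otherwise). For each node $i\in\mathcal{V}$ let $T'_{doi}>0$, $X_{di}>X'_{di}$, $B_{ii}<0$, set $\alpha_i=\frac{1}{X_{di}-X'_{di}}-B_{ii}$ and $\gamma_i=\frac{T'_{doi}}{X_{di}-X'_{di}}$, and consider the scalar linear node plant $$H^V_{pi}:\ \dot x^V_{pi}=-\tfrac{\alpha_i}{\gamma_i}x^V_{pi}+\tfrac{1}{\gamma_i}u^V_{pi},\qquad y^V_{pi}=x^V_{pi}.$$ For each edge $l\in\mathcal{L}$ let $\tau^V_l>0$, $K^V_{l[1]}>0$ and consider the edge controller $$H^V_{cl}:\ \dot x^V_{cl}=-\tfrac{1}{\tau^V_l}x^V_{cl}+\tfrac{K^V_{l[1]}}{\tau^V_l}u^V_{cl},\qquad y^V_{cl}=x^V_{cl}.$$ Consider the negative feedback interconnection in which, for each edge $e_l$ with initial node $i$ and terminal node $j$, $u^V_{cl}=y^V_{pi}-y^V_{pj}$, and for each node $i$, $u^V_{pi}=-\sum_{l=1}^L q_{il}y^V_{cl}$. Then this closed-loop system achieves output consensus: there exists an open domain $\mathcal{D}_c$ in the joint state space containing the origin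 such that $\lim_{t\to\infty}|y^V_{pi}(t)-y^V_{pj}(t)|=0$ for all $i,j\in\mathcal{V}$ and all initial conditions in $\mathcal{D}_c$.
   Context: In the application, $x^V_{pi}$ is the deviation of the voltage magnitude of generator bus $i$ from its nominal value; $T'_{doi}$ is the direct axis transient open-circuit time constant, $X_{di}$ and $X'_{di}$ the direct axis synchronous and transient reactances, and $B_{ii}$ the self-susceptance. *)

(* Defs.v *)
From HB Require Import structures.
From mathcomp Require Import all_boot all_order all_algebra.
From mathcomp Require Import all_classical all_reals all_analysis.
Set Implicit Arguments. Unset Strict Implicit. Unset Printing Implicit Defensive.
Import Order.TTheory GRing.Theory Num.Theory.
Local Open Scope ring_scope.

(* An oriented multigraph on nodes 'I_N with edges 'I_L:
   edge l goes from node [src l] (initial) to node [dst l] (terminal). *)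

Definition adjacent (N L : nat) (src dst : 'I_L -> 'I_N) : rel 'I_N :=
  fun i j => [exists l, ((src l == i) && (dst l == j)) || ((src l == j) && (dst l == i))].

Definition graph_connected (N L : nat) (src dst : 'I_L -> 'I_N) : Prop :=
  forall i j : 'I_N, connect (adjacent src dst) i j.

Definition incidence (R : realType) (N L : nat) (src dst : 'I_L -> 'I_N)
  (i : 'I_N) (l : 'I_L) : R :=
  if src l == i then 1 else if dst l == i then -1 else 0.

(* Main.v *)
From HB Require Import structures.
From mathcomp Require Import all_boot all_order all_algebra.
From mathcomp Require Import all_classical all_reals all_analysis.
From mathcomp Require Import ring lra.
Import Order.TTheory GRing.Theory Num.Theory.
Import numFieldNormedType.Exports.
Local Open Scope classical_set_scope.
Local Open Scope ring_scope.

Lemma isd_sq (R : realType) (f : R -> R) (t a df : R) :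
  is_derive t 1 f df -> is_derive t (1:R) (fun s => a * (f s * f s)) (a * (2 * f t * df)).
Proof.
move=> H.
have H3 := is_deriveZ a (is_deriveM H H).
have -> : (fun s => a * (f s * f s)) = a *: (f * f) by apply/funext => s.
apply: is_derive_eq H3 _.
rewrite /GRing.scale /=; ring.
Qed.

Lemma isd_sum (R : realType) n (h : 'I_n -> R -> R) (t : R) (dh : 'I_n -> R) :
  (forall i, is_derive t (1:R) (h i) (dh i)) ->
  is_derive t (1:R) (fun s => \sum_(i < n) h i s) (\sum_(i < n) dh i).
Proof.
move=> H; have := is_derive_sum H; by rewrite fct_sumE.
Qed.

Lemma isd_mul1 (R : realType) (f : R -> R) (t c df : R) :
  is_derive t (1:R) f df -> is_derive t (1:R) (fun s => f s * (1 + c * s)) (df * (1 + c * t) + f t * c).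
Proof.
move=> H.
have Hg : is_derive t (1:R) (fun s : R => 1 + c * s) c.
  have := is_deriveD (is_derive_cst (1:R) t 1) (is_deriveZ c (is_derive_id t (1:R))).
  have -> : (cst 1 + c *: id) = (fun s : R => 1 + c * s) by apply/funext.
  by rewrite add0r /GRing.scale /= mulr1.
have := is_deriveM H Hg.
have -> : (f * (fun s : R => 1 + c * s)) = (fun s => f s * (1 + c * s)) by apply/funext.
move=> H2; apply: is_derive_eq H2 _.
rewrite /GRing.scale /=; ring.
Qed.

Lemma term_le_sum (R : realType) n (F : 'I_n -> R) i :
  (forall k, 0 <= F k) -> F i <= \sum_k F k.
Proof. by move=> H; rewrite (bigD1 i) //= lerDl sumr_ge0. Qed.

Require Import Defs.

Lemma incid_sum (R : realType) (N L : nat) (src dst : 'I_L -> 'I_N) (x : 'I_N -> R) l :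
  src l != dst l ->
  \sum_i incidence R src dst i l * x i = x (src l) - x (dst l).
Proof.
move=> Hsd.
rewrite (bigD1 (src l)) //= (bigD1 (dst l)) /=; last by apply: contraNneq Hsd => ->.
rewrite big1 ?addr0.
  by rewrite /incidence eqxx (negbTE Hsd) /= eqxx mul1r mulN1r.
move=> k /andP[k1 k2]; rewrite /incidence eq_sym (negbTE k1) eq_sym (negbTE k2).
by rewrite mul0r.
Qed.

Theorem theorem4 (R : realType) (N L : nat) (src dst : 'I_L -> 'I_N)
  (Tdo Xd Xd' B : 'I_N -> R) (tau K : 'I_L -> R) :
  (forall l, src l != dst l) ->
  graph_connected src dst ->
  (forall i, 0 < Tdo i) -> (forall i, Xd' i < Xd i) -> (forall i, B i < 0) ->
  (forall l, 0 < tau l) -> (forall l, 0 < K l) ->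
  let alpha i := (Xd i - Xd' i)^-1 - B i in
  let gamma i := Tdo i / (Xd i - Xd' i) in
  exists Dc : set ('rV[R]_N * 'rV[R]_L),
    open Dc /\ Dc (0, 0) /\
    forall (xp : 'I_N -> R -> R) (xc : 'I_L -> R -> R),
      (* trajectories are continuous on [0, +oo) *)
      (forall i, {within `[0, +oo[, continuous (xp i)}) ->
      (forall l, {within `[0, +oo[, continuous (xc l)}) ->
      (* plant dynamics with u_pi = - sum_l q_il y_cl, for t > 0 *)
      (forall i (t : R), 0 < t ->
         derivable (xp i) t 1 /\
         derive1 (xp i) t = - (alpha i / gamma i) * xp i t
                        + (gamma i)^-1 * (- \sum_(l < L) incidence R src dst i l * xc l t)) ->
      (* controller dynamics with u_cl = y_p(src l) - y_p(dst l), for t > 0 *)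
      (forall l (t : R), 0 < t ->
         derivable (xc l) t 1 /\
         derive1 (xc l) t = - (tau l)^-1 * xc l t
                        + (K l / tau l) * (xp (src l) t - xp (dst l) t)) ->
      (* initial condition in Dc *)
      Dc (\row_i xp i 0, \row_l xc l 0) ->
      forall i j : 'I_N, `|xp i t - xp j t| @[t --> +oo] --> 0.
Proof.
move=> Hsd _ HT HX HB Htau HK alpha gamma.
exists setT; split; first exact: openT; split => //.
move=> xp xc _ _ Hp Hc _ i j.
have d0 k : 0 < Xd k - Xd' k by rewrite subr_gt0.
have al0 k : 0 < alpha k by rewrite /alpha addr_gt0 ?invr_gt0 ?oppr_gt0.
have ga0 k : 0 < gamma k by rewrite /gamma divr_gt0.
pose b l := tau l / K l.
have b0 l : 0 < b l by rewrite /b divr_gt0.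
pose V s := \sum_k gamma k * (xp k s * xp k s) + \sum_l b l * (xc l s * xc l s).
pose D s := \sum_k alpha k * (xp k s * xp k s) + \sum_l (K l)^-1 * (xc l s * xc l s).
have dV (t : R) : 0 < t -> is_derive t (1:R) V (- 2 * D t).
  move=> t0.
  have Hp' k : is_derive t (1:R) (xp k) (derive1 (xp k) t).
    by rewrite derive1E; apply: derivableP; exact: (Hp k t t0).1.
  have Hc' l : is_derive t (1:R) (xc l) (derive1 (xc l) t).
    by rewrite derive1E; apply: derivableP; exact: (Hc l t t0).1.
  have := is_deriveD (@isd_sum _ _ _ _ _ (fun k => @isd_sq _ _ _ (gamma k) _ (Hp' k)))
                     (@isd_sum _ _ _ _ _ (fun l => @isd_sq _ _ _ (b l) _ (Hc' l))).
  have -> : ((fun s => \sum_(k < N) gamma k * (xp k s * xp k s)) +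
             (fun s => \sum_(l < L) b l * (xc l s * xc l s))) = V by apply/funext.
  move=> H; apply: is_derive_eq H _.
  pose S k := \sum_(l < L) incidence R src dst k l * xc l t.
  pose Dl l := xp (src l) t - xp (dst l) t.
  have E1 : \sum_k gamma k * (2 * xp k t * derive1 (xp k) t) =
     \sum_k ((-2) * (alpha k * (xp k t * xp k t)) + (-2) * (xp k t * S k)).
    apply: eq_bigr => k _; rewrite (Hp k t t0).2 -/(S k).
    have := ga0 k; rewrite lt0r => /andP[gk _].
    by field.
  have E2 : \sum_l b l * (2 * xc l t * derive1 (xc l) t) =
     \sum_l ((-2) * ((K l)^-1 * (xc l t * xc l t)) + 2 * (xc l t * Dl l)).
    apply: eq_bigr => l _; rewrite (Hc l t t0).2 -/(Dl l) /b.
    have := Htau l; rewrite lt0r => /andP[tl _].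
    have := HK l; rewrite lt0r => /andP[kl _].
    move: (Dl l) (xc l t) => d y; field; by rewrite kl tl.
  have E3 : \sum_k xp k t * S k = \sum_l xc l t * Dl l.
    under eq_bigr do rewrite /S mulr_sumr.
    rewrite exchange_big /=; apply: eq_bigr => l0 _.
    rewrite /Dl -(@incid_sum _ _ _ src dst (xp ^~ t) l0 (Hsd l0)) mulr_sumr.
    by apply: eq_bigr => k _; ring.
  rewrite -[LHS]/(\sum_k gamma k * (2 * xp k t * derive1 (xp k) t) + \sum_l b l * (2 * xc l t * derive1 (xc l) t)).
  rewrite E1 E2 !big_split /= -!mulr_sumr E3 /D; ring.
pose S := 1 + \sum_k gamma k / alpha k + \sum_l tau l.
have S0 : 0 < S.
  have h1 : 0 <= \sum_k gamma k / alpha k.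
    by rewrite sumr_ge0 // => k _; apply: divr_ge0; apply: ltW.
  have h2 : 0 <= \sum_l tau l by rewrite sumr_ge0 // => k _; apply: ltW.
  rewrite /S; lra.
pose c := S^-1.
have c0 : 0 < c by rewrite invr_gt0.
have cga k : c * gamma k <= alpha k.
  rewrite mulrC ler_pdivrMr //.
  have -> : gamma k = alpha k * (gamma k / alpha k).
    by have := al0 k; rewrite lt0r => /andP[ak _]; field.
  apply: ler_wpM2l; first exact: ltW.
  have := @term_le_sum _ _ (fun k => gamma k / alpha k) k.
  have h2 : 0 <= \sum_l tau l by rewrite sumr_ge0 // => m _; apply: ltW.
  move=> /(_ (fun m => divr_ge0 (ltW (ga0 m)) (ltW (al0 m)))) /= h.
  rewrite /S; lra.
have cb l : c * b l <= (K l)^-1.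
  rewrite /b mulrA ler_pdivrMr // mulVf; last by have := HK l; rewrite lt0r => /andP[].
  rewrite mulrC ler_pdivrMr // mul1r.
  have h := @term_le_sum _ _ tau l (fun m => ltW (Htau m)).
  have h1 : 0 <= \sum_k gamma k / alpha k.
    by rewrite sumr_ge0 // => k _; apply: divr_ge0; apply: ltW.
  rewrite /S; lra.
have Vge0 s : 0 <= V s.
  apply: addr_ge0; apply: sumr_ge0 => k _; (apply: mulr_ge0; [apply: ltW | by rewrite -expr2 sqr_ge0]); [exact: ga0 | exact: b0].
have cVD s : c * V s <= D s.
  rewrite /V /D mulrDr !mulr_sumr; apply: lerD; apply: ler_sum => k _;
    (rewrite [c * _]mulrA; apply: ler_wpM2r; [by rewrite -expr2 sqr_ge0|]); [exact: cga|exact: cb].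
have Dge0 s : 0 <= D s by apply: le_trans (cVD s); rewrite mulr_ge0 // ltW.
pose W s := V s * (1 + c * s).
have dW (t : R) : 0 < t -> is_derive t (1:R) W (-2 * D t * (1 + c * t) + V t * c).
  by move=> t0; apply: isd_mul1; exact: dV.
have Wle (t : R) : 1 <= t -> W t <= W 1.
  move=> t1.
  have dr x : x \in `[1, t] -> derivable W x 1.
    move=> /[!in_itv] /= /andP[x1 _]; have x0 : 0 < x by apply: lt_le_trans x1.
    by have := dW x x0; case.
  apply: (@ler0_derive1_le_cc _ W 1 t) => //.
  - by move=> x /[!in_itv] /= /andP[x1 xt]; apply: dr; rewrite in_itv /= (ltW x1) (ltW xt).
  - move=> x /[!in_itv] /= /andP[x1 _]; have x0 : 0 < x by apply: lt_trans x1.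
    rewrite derive1E (@derive_val _ _ _ _ _ _ _ (dW x x0)).
    have := cVD x; have := Dge0 x; have := Vge0 x.
    have cx : 0 <= c * x by rewrite mulr_ge0 // ltW.
    move=> h1 h2 h3; nra.
  - exact: derivable_within_continuous.
  - by rewrite in_itv /= lexx t1.
  - by rewrite in_itv /= lexx t1.
have bound k (t : R) : 1 <= t -> gamma k * (xp k t * xp k t) * (1 + c * t) <= W 1.
  move=> t1; apply: le_trans (Wle t t1); rewrite /W.
  have ct : 0 <= 1 + c * t by rewrite addr_ge0 // mulr_ge0 // ltW // (lt_le_trans ltr01 t1).
  apply: ler_wpM2r => //.
  have h := @term_le_sum _ _ (fun k => gamma k * (xp k t * xp k t)) k.
  have h2 : 0 <= \sum_l b l * (xc l t * xc l t).
    by apply: sumr_ge0 => l _; apply: mulr_ge0; [exact/ltW/b0|rewrite -expr2 sqr_ge0].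
  have h3 := h (fun m => mulr_ge0 (ltW (ga0 m)) (sqr_ge0 (xp m t))).
  rewrite /V; lra.
have M0 : 0 <= W 1 by rewrite /W mulr_ge0 // addr_ge0 // mulr_ge0 // ltW.
have conv k : xp k t @[t --> +oo] --> 0.
  apply/cvgrPdist_lt => e e0.
  pose q := gamma k * c * (e * e).
  have q0 : 0 < q.
    rewrite /q; apply: mulr_gt0; [apply: mulr_gt0|apply: mulr_gt0];
      [exact: ga0|exact: c0|exact: e0|exact: e0].
  exists (1 + W 1 / q); split; first by rewrite num_real.
  move=> t Tt.
  have Mq : 0 <= W 1 / q by rewrite divr_ge0 // ltW.
  have t1 : 1 <= t by apply: ltW; apply: le_lt_trans Tt; rewrite lerDl.
  have h1 := bound k t t1.
  have P0 : 0 < gamma k * (1 + c * t).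
    apply: mulr_gt0; first exact: ga0.
    have ct : 0 <= c * t := mulr_ge0 (ltW c0) (le_trans ler01 t1).
    lra.
  have E1 : q * (W 1 / q) = W 1 by field; rewrite gt_eqF.
  have E2 : q * t > q * (1 + W 1 / q) by rewrite ltr_pM2l.
  have E3 : e * e * (gamma k * (1 + c * t)) = q * t + e * e * gamma k by rewrite /q; ring.
  have E4 : 0 <= e * e * gamma k := mulr_ge0 (mulr_ge0 (ltW e0) (ltW e0)) (ltW (ga0 k)).
  have h2 : (xp k t * xp k t) * (gamma k * (1 + c * t)) < e * e * (gamma k * (1 + c * t)).
    have -> : (xp k t * xp k t) * (gamma k * (1 + c * t)) =
              gamma k * (xp k t * xp k t) * (1 + c * t) by ring.
    rewrite E3; move: E2; rewrite mulrDr mulr1 E1 => E2; lra.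
  rewrite ltr_pM2r // in h2.
  rewrite sub0r normrN ltr_norml; apply/andP; split; nra.
have := cvg_norm (cvgB (conv i) (conv j)).
move=> H; rewrite subr0 normr0 in H; apply: H; exact: _.
Qed.
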